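(* In the standard variable-processor cup game on $n$ cups starting from all fills $0$, against a greedy emptier, the filler has a strategy that achieves a backlog of at least $\frac{n-1}{2}$ within at most $n^3$ rounds.
   Context: The (standard) variable-processor cup game on $n$ cups: real fills $x_1,\dots,x_n$; in each round the filler chooses an integer $1\le p\le n$ and reals $a_i\in[0,1]$ with $\sum_i a_i=p$ and adds $a_i$ to cup $i$; then the emptier chooses $p$ distinct cups and replaces each of their fills $x$ by $\max(0,x-1)$. The backlog is $\max_i x_i$. The greedy emptier empties from the $p$ fullest cups after the filler's move. *)

(* Defs.v *)
From HB Require Import structures.
From mathcomp Require Import all_boot all_order all_algebra.
From mathcomp Require Import reals.
Set Implicit Arguments. Unset Strict Implicit. Unset Printing Implicit Defensive.
Import Order.TTheory GRing.Theory Num.Theory.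
Local Open Scope ring_scope.

Definition cups (R : realType) (n : nat) := 'I_n -> R.

Definition cups0 (R : realType) (n : nat) : cups R n := fun _ => 0.

(* A filler move: a number of processors p and the amounts a_i added. *)
Definition filler_move (R : realType) (n : nat) := (nat * cups R n)%type.

Definition valid_filler_move (R : realType) (n : nat) (m : filler_move R n) : Prop :=
  let: (p, a) := m in
  [/\ (1 <= p <= n)%N, (forall i, 0 <= a i <= 1) & \sum_(i < n) a i = p%:R].

Definition add_fill (R : realType) (n : nat) (x a : cups R n) : cups R n :=
  fun i => x i + a i.

Definition greedy_choice (R : realType) (n : nat) (y : cups R n) (p : nat)
  (S : {set 'I_n}) : Prop :=
  #|S| = p /\ (forall i j, i \in S -> j \notin S -> y j <= y i).

Definition empty_cups (R : realType) (n : nat) (y : cups R n) (S : {set 'I_n})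
  : cups R n :=
  fun i => if i \in S then Num.max 0 (y i - 1) else y i.

(* A (deterministic, adaptive) filler strategy: given the history of
   configurations x_0, ..., x_t (at the start of each round so far),
   it chooses the move of round t+1. *)
Definition filler_strategy (R : realType) (n : nat) :=
  seq (cups R n) -> filler_move R n.

Definition history (R : realType) (n : nat) (play : nat -> cups R n) (t : nat)
  : seq (cups R n) := [seq play k | k <- iota 0 t.+1].

Definition greedy_play (R : realType) (n : nat) (f : filler_strategy R n)
  (T : nat) (play : nat -> cups R n) : Prop :=
  play 0%N = @cups0 R n /\
  forall t, (t < T)%N ->
    let m := f (history play t) in
    exists S : {set 'I_n},
      greedy_choice (add_fill (play t) m.2) m.1 S /\
      play t.+1 = empty_cups (add_fill (play t) m.2) S.

Definition backlog_ge (R : realType) (n : nat) (x : cups R n) (b : R) : Prop :=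
  exists i : 'I_n, b <= x i.

(* Main.v *)
Require Import Defs.
From HB Require Import structures.
From mathcomp Require Import all_boot all_order all_algebra.
From mathcomp Require Import reals.
From mathcomp Require Import zify lra.
Import Order.TTheory GRing.Theory Num.Theory.
Local Open Scope ring_scope.

Lemma last_iota_aux (a t : nat) : last a (iota a.+1 t) = (a + t)%N.
Proof.
elim: t a => [|t IH] a /=; first by rewrite addn0.
by rewrite IH addnS.
Qed.

Lemma last_history (R : realType) (n : nat) (play : nat -> cups R n) t :
  last (@cups0 R n) (history play t) = play t.
Proof.
rewrite /history /= last_map.
by rewrite (last_iota_aux 0 t).
Qed.

Lemma sq_lemma (a : nat) : (a ^ 2 + a ^ 2 < a.-1 ^ 2 + a.+1 ^ 2)%N.
Proof. case: a => [|s] //=. rewrite !expnS !expn0 !muln1 !mulSn !mulnS; lia. Qed.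

Section S.
Variables (R : realType) (n : nat).

Definition pickpair (x : cups R n) :=
  [pick ij : 'I_n * 'I_n | (ij.1 != ij.2) && (x ij.1 == x ij.2)].

Definition Uset (x : cups R n) (i : 'I_n) : {set 'I_n} := [set k | x i < x k].

Definition fillv (x : cups R n) (i j : 'I_n) : cups R n :=
  fun k => if x i < x k then 1 else if (k == i) || (k == j) then 2^-1 else 0.

Definition strat : filler_strategy R n := fun h =>
  let x := last (@cups0 R n) h in
  match pickpair x with
  | Some ij => ((#|Uset x ij.1|).+1, fillv x ij.1 ij.2)
  | None => (n, fun _ => 1)
  end.


Lemma fillvE (x : cups R n) i j k : i != j -> x i = x j ->
  fillv x i j k = (if k \in Uset x i then 1 else 0) +
     ((if k == i then 1 else 0) + (if k == j then 1 else 0)) / 2.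
Proof.
move=> ij xij; rewrite /fillv inE.
case: ifP => [lt|nlt].
  have ki : k != i by apply: contraTneq lt => ->; rewrite ltxx.
  have kj : k != j by apply: contraTneq lt => ->; rewrite xij ltxx.
  by rewrite (negbTE ki) (negbTE kj); lra.
case: (eqVneq k i) => [->|ki] /=; first by rewrite (negbTE ij); lra.
by case: (eqVneq k j) => _ /=; lra.
Qed.

Lemma sum_ind (k0 : 'I_n) : \sum_(k < n) (if k == k0 then 1 else 0 : R) = 1.
Proof. by rewrite (bigD1 k0) //= eqxx big1 ?addr0 // => k /negbTE ->. Qed.

Lemma strat_valid h : (0 < n)%N -> valid_filler_move (strat h).
Proof.
move=> hn; rewrite /strat /pickpair; case: pickP => [[i j] /= /andP[ij /eqP xij]|_].
  set x := last _ h; rewrite /valid_filler_move; split.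
  - have : Uset x i \subset [set~ i].
      by apply/subsetP => k; rewrite !inE; apply: contraTneq => ->; rewrite ltxx.
    move/subset_leq_card; rewrite cardsC1 card_ord => H.
    by apply: (leq_ltn_trans H); rewrite ltn_predL.
  - move=> k; rewrite /fillv; case: ifP => _; first lra.
    by case: ifP => _; lra.
  - under eq_bigr => k _ do rewrite (fillvE _ _ _ k ij xij).
    rewrite big_split /= -big_distrl /= big_split /= !sum_ind.
    rewrite -big_mkcond /= sumr_const -natr1 -[(#|_|.+1)%N]addn1 natrD /x.
    by rewrite divff // -[1 + 1]/(2%:R : R) pnatr_eq0.
rewrite /valid_filler_move; split => //.
- by rewrite hn leqnn.
- by move=> _; lra.
- by rewrite sumr_const card_ord.
Qed.

Lemma sum_two (f g : 'I_n -> nat) e o : e != o ->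
  (forall k, k != e -> k != o -> f k = g k) ->
  (f e ^ 2 + f o ^ 2 < g e ^ 2 + g o ^ 2)%N ->
  (\sum_(k < n) f k ^ 2 < \sum_(k < n) g k ^ 2)%N.
Proof.
move=> eo hfg hlt.
rewrite (bigD1 e) //= [X in (_ < X)%N](bigD1 e) //=.
rewrite (bigD1 o) 1?eq_sym //= [X in (_ < _ + X)%N](bigD1 o) 1?eq_sym //=.
rewrite (eq_bigr (fun k => (g k ^ 2)%N)); last first.
  by move=> k /andP[ke ko]; rewrite hfg.
lia.
Qed.

Lemma step_lemma (x : cups R n) (m : 'I_n -> nat) i j S :
  (forall k, x k = (m k)%:R / 2) -> i != j -> x i = x j ->
  greedy_choice (add_fill x (fillv x i j)) (#|Uset x i|).+1 S ->
  exists m' : 'I_n -> nat,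
    (forall k, empty_cups (add_fill x (fillv x i j)) S k = (m' k)%:R / 2) /\
    (\sum_(k < n) m k ^ 2 < \sum_(k < n) m' k ^ 2)%N.
Proof.
move=> hm ij xij [cS hS].
set U := Uset x i; set y := add_fill x (fillv x i j).
have x0 k : 0 <= x k by rewrite hm divr_ge0 ?ler0n.
have yU k : k \in U -> y k = x k + 1.
  by rewrite /y /add_fill /fillv inE => ->.
have xnU k : k \notin U -> x k <= x i by rewrite inE -leNgt.
have ynU k : k \notin U -> y k <= x i + 2^-1.
  move=> kU; have := xnU k kU; move: kU.
  rewrite /y /add_fill /fillv inE => /negbTE ->.
  by case: ifP => _; lra.
have ynUij k : k \notin U -> k != i -> k != j -> y k = x k.
  move=> kU ki kj; move: kU.
  by rewrite /y /add_fill /fillv inE => /negbTE ->; rewrite (negbTE ki) (negbTE kj) addr0.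
have iU : i \notin U by rewrite inE ltxx.
have jU : j \notin U by rewrite inE xij ltxx.
have yij k : k \notin U -> (k == i) || (k == j) -> y k = x i + 2^-1.
  move=> kU kij; move: kU.
  rewrite /y /add_fill /fillv inE => /negbTE ->; rewrite kij.
  by case/orP: kij => /eqP ->; rewrite ?xij.
have US : U \subset S.
  apply/subsetP => u uU; apply/negPn/negP => uS.
  have SU : S \subset U :\ u.
    apply/subsetP => s sS; rewrite !inE.
    have hsu := hS s u sS uS; rewrite -/y in hsu.
    apply/andP; split; first by apply: contraNneq uS => <-.
    apply/negPn/negP => sU.
    have sU' : s \notin U by rewrite inE.
    have := ynU s sU'; rewrite yU // in hsu.
    have : x i < x u by rewrite inE in uU.
    lra.
  have := subset_leq_card SU; rewrite cS (cardsD1 u U) uU.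
  rewrite -/U; lia.
have cD : #|S :\: U| == 1%N.
  by rewrite cardsD (setIidPr US) cS subSnn.
case/cards1P: cD => e He.
have inS k : (k \in S) = (k \in U) || (k == e).
  case kU: (k \in U); first by rewrite (subsetP US).
  have : (k \in S :\: U) = (k == e) by rewrite He inE.
  by rewrite inE kU.
have eSU : e \in S :\: U by rewrite He inE.
have eU : e \notin U by move: eSU; rewrite inE => /andP[].
have eS : e \in S by rewrite inS eqxx orbT.
have eij : (e == i) || (e == j).
  apply/negPn/negP => /norP [ei ej].
  have iS : i \notin S by rewrite inS (negbTE iU) eq_sym (negbTE ei).
  have := hS e i eS iS; rewrite -/y.
  rewrite (yij i iU) ?eqxx // (ynUij e eU ei ej).
  have := xnU e eU; lra.
have mij : m i = m j.
  have : (m i)%:R = (m j)%:R :> R by have := hm i; have := hm j; rewrite xij; lra.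
  by move/eqP; rewrite eqr_nat => /eqP.
set o := if e == i then j else i.
have oij : (o == i) || (o == j) by rewrite /o; case: ifP; rewrite eqxx ?orbT.
have oe : o != e.
  by rewrite /o; case: (eqVneq e i) => [->|ei]; rewrite 1?eq_sym //; move: eij; rewrite (negbTE ei).
have moe : m o = m e.
  by rewrite /o; case: (eqVneq e i) => [->|ei] //; move: eij; rewrite (negbTE ei) /= => /eqP ->.
have oU : o \notin U by rewrite /o; case: ifP.
have oS : o \notin S by rewrite inS (negbTE oU) (negbTE oe).
have other k : k != e -> k != o -> (k != i) && (k != j).
  move=> ke ko; rewrite /o in ko; case: (eqVneq e i) eij ko => [<-|ei] /=.
    by move=> _ kj; rewrite ke kj.
  by move=> /eqP <- ki; rewrite ke ki.
pose m' := fun k => if k == e then (m k).-1 else if k == o then (m k).+1 else m k.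
exists m'; split.
  move=> k; rewrite /empty_cups inS /m'.
  case: (eqVneq k e) => [->|ke].
    rewrite orbT (yij e eU eij) ?eqxx.
    have -> : x i = x e by case/orP: eij => /eqP ->.
    rewrite hm; case: (m e) => [|s] /=.
      by rewrite max_l //; lra.
    rewrite max_r; last by rewrite -natr1; have := ler0n R s; lra.
    by rewrite -natr1; lra.
  rewrite orbF; case kU: (k \in U).
    rewrite yU // addrK max_r //.
    have ko : k != o by apply: contraTneq kU => ->; rewrite (negbTE oU).
    by rewrite (negbTE ko) hm.
  case: (eqVneq k o) => [->|ko].
    rewrite (yij o oU oij).
    have -> : x i = x o by case/orP: oij => /eqP ->.
    by rewrite hm -natr1; lra.
  case/andP: (other k ke ko) => ki kj.
  by rewrite ynUij ?kU // hm.
apply: (sum_two m m' e o); first by rewrite eq_sym.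
  by move=> k ke ko; rewrite /m' (negbTE ke) (negbTE ko).
rewrite /m' eqxx (negbTE oe) eqxx moe.
exact: sq_lemma.
Qed.
End S.

Lemma pigeon (n : nat) (m : 'I_n -> nat) : (0 < n)%N -> injective m ->
  (forall k, m k < n.-1)%N -> False.
Proof.
move=> hn minj hlt.
have U : uniq (map m (enum 'I_n)) by rewrite map_inj_uniq ?enum_uniq.
have sub : {subset map m (enum 'I_n) <= iota 0 n.-1}.
  by move=> a /mapP [k _ ->]; rewrite mem_iota add0n hlt.
have := uniq_leq_size U sub; rewrite size_map size_enum_ord size_iota.
by rewrite leqNgt ltn_predL hn.
Qed.

Lemma half_lt (R : realType) (n a : nat) :
  (a%:R / 2 < ((n%:R - 1) / 2) :> R) -> (a < n.-1)%N.
Proof.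
move=> h.
have : ((a.+1)%:R < n%:R :> R) by rewrite -natr1; lra.
rewrite ltr_nat; case: n {h} => [|n] //=.
Qed.

Lemma sum_bound (n : nat) (m : 'I_n -> nat) : (0 < n)%N ->
  (forall k, m k < n.-1)%N -> (\sum_(k < n) m k ^ 2 < n ^ 3)%N.
Proof.
move=> hn hlt.
apply: (@leq_ltn_trans (\sum_(k < n) n.-1 ^ 2)%N).
  apply: leq_sum => k _; rewrite leq_exp2r //; exact: ltnW.
rewrite sum_nat_const card_ord [(n ^ 3)%N]expnS ltn_pmul2l //.
by rewrite ltn_exp2r // ltn_predL.
Qed.

Theorem theorem5p2 (R : realType) (n : nat) (hn : (0 < n)%N) :
  exists f : filler_strategy R n,
    (forall h, valid_filler_move (f h)) /\
    forall play : nat -> cups R n,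
      greedy_play f (n ^ 3) play ->
      exists t, (t <= n ^ 3)%N /\ backlog_ge (play t) ((n%:R - 1) / 2).
Proof.
exists (strat R n); split; first by move=> h; exact: strat_valid.
move=> play [H0 Hstep].
set b := (n%:R - 1) / 2.
have inv : forall t, (t <= n ^ 3)%N ->
  (exists t', (t' <= t)%N /\ backlog_ge (play t') b) \/
  exists m : 'I_n -> nat, (forall k, play t k = (m k)%:R / 2) /\
     (t <= \sum_(k < n) m k ^ 2)%N.
  elim=> [_|t IH ht].
    right; exists (fun _ => 0%N); split; last by [].
    by move=> k; rewrite H0 /cups0 mul0r.
  have ht' : (t < n ^ 3)%N by [].
  case: (IH (ltnW ht')) => [[t' [t't bt']]|[m [hm hsum]]].
    by left; exists t'; split => //; apply: leq_trans t't _.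
  case: (boolP [exists k, b <= play t k]) => [/existsP [k hk]|/existsPn nb].
    by left; exists t; split => //; exists k.
  have mlt : forall k, (m k < n.-1)%N.
    move=> k; apply: (@half_lt R); rewrite -hm -/b.
    by have := nb k; rewrite -ltNge.
  have := Hstep t ht'; rewrite /= /strat last_history /pickpair.
  case: pickP => [[i j] /= /andP[ij /eqP xij]|none].
    move=> [S [gS ->]] /=.
    have [m' [hm' hlt]] := @step_lemma R n _ _ _ _ S hm ij xij gS.
    right; exists m'; split => //.
    exact: leq_ltn_trans hsum hlt.
  move=> _; exfalso.
  have minj : injective m.
    move=> k1 k2 e12; apply/eqP; apply/negPn/negP => k12.
    have := none (k1, k2); rewrite /= k12 /= hm e12 -hm.
    by rewrite eqxx.
  exact: (@pigeon n m hn minj mlt).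
case: (inv (n ^ 3)%N (leqnn _)) => [[t' [t't bt']]|[m [hm hsum]]].
  by exists t'.
case: (boolP [exists k, b <= play (n ^ 3)%N k]) => [/existsP [k hk]|/existsPn nb].
  by exists (n ^ 3)%N; split => //; exists k.
have mlt : forall k, (m k < n.-1)%N.
  move=> k; apply: (@half_lt R); rewrite -hm -/b.
  by have := nb k; rewrite -ltNge.
have := @sum_bound n m hn mlt.
by rewrite ltnNge hsum.
Qed.
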